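(* Let $(\Gamma,\mathcal{G}_\Gamma)$ and $(\Sigma,\mathcal{G}_\Sigma)$ be labeled graphs whose vertex groups are all directly-indecomposable cyclic groups, and let $\phi:W(\Gamma)\to W(\Sigma)$ be a group isomorphism. Then the map $V_{\Gamma_A}\to W(\Sigma_A)$, $v\mapsto\rho_{\Sigma_A}(\phi(v))$, extends to a group isomorphism $W(\Gamma_A)\to W(\Sigma_A)$.
   Context: A labeled graph $(\Lambda,\mathcal{G}_\Lambda)$ consists of a nonempty finite simplicial graph $\Lambda$ with vertex set $V_\Lambda$ and a family $\mathcal{G}_\Lambda=\{G_v\}_{v\in V_\Lambda}$ of nontrivial groups. Its graph product $W(\Lambda)$ is the quotient of the free product $\ast_{v}G_v$ by the relations $gh=hg$ for $g\in G_v$, $h\in G_{v'}$ with $v,v'$ adjacent. For a full subgraph $\Theta$, $W(\Theta)$ denotes the subgroup generated by the images of $G_v$, $v\in V_\Theta$ (isomorphic to the graph product of the labeled subgraph). A cyclic group is directly-indecomposable if it is infinite or has prime-power order. For cyclic vertex groups, a generator of each $G_v$ is fixed and also denoted $v$. $\Lambda_T$ (resp. $\Lambda_A$) is the full subgraph of $\Lambda$ spanned by the vertices $v$ with $G_v$ finite (resp. infinite). $\rho_{\Sigma_A}:W(\Sigma)\to W(\Sigma_A)$ is the retraction homomorphism sending each $v\in V_{\Sigma_A}$ to $v$ and each $v\in V_{\Sigma_T}$ to $1$. *)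

(* Defs.v *)
From HB Require Import structures.
From mathcomp Require Import all_boot all_order all_algebra.
Set Implicit Arguments. Unset Strict Implicit. Unset Printing Implicit Defensive.
Import Order.TTheory GRing.Theory Num.Theory.

(* A labeled graph with cyclic vertex groups: vertex type, adjacency relation,
   and for each vertex v the order [lord v] of the cyclic group G_v
   (0 means G_v = Z, otherwise G_v = Z/(lord v)Z).  The fixed generator of
   G_v is the class of 1. *)
Record lgraph := LGraph { lv : finType; ladj : rel lv; lord : lv -> nat }.
Arguments ladj : clear implicits.
Arguments lord : clear implicits.

Definition wf_lgraph (G : lgraph) : Prop :=
  [/\ 0 < #|lv G|,
      (forall x y, ladj G x y = ladj G y x),
      (forall x, ~~ ladj G x x) &
      (forall x, lord G x <> 1)].

(* All vertex groups are directly-indecomposable cyclic groups: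
   infinite, or of prime-power order (> 1). *)
Definition dir_indec_cyclic (G : lgraph) : Prop :=
  forall x, lord G x = 0 \/ exists p k, prime p /\ 0 < k /\ lord G x = p ^ k.

(* Letters (v, k) stand for the element k * (generator) of G_v. *)
Definition word (G : lgraph) := seq (lv G * int).

(* Congruence on words defining W(G) = ( *_v G_v ) / << [G_v, G_w], v ~ w >>. *)
Inductive gp_eq (G : lgraph) : word G -> word G -> Prop :=
| gp_refl w : gp_eq w w
| gp_sym u w : gp_eq u w -> gp_eq w u
| gp_trans u w z : gp_eq u w -> gp_eq w z -> gp_eq u z
| gp_cat u1 u2 w1 w2 : gp_eq u1 u2 -> gp_eq w1 w2 -> gp_eq (u1 ++ w1) (u2 ++ w2)
| gp_merge v (a b : int) : gp_eq [:: (v, a); (v, b)] [:: (v, (a + b)%R)]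
| gp_triv v (k : int) : ((lord G v)%:Z %| k)%Z -> gp_eq [:: (v, k)] [::]
| gp_comm v w (a b : int) : ladj G v w -> gp_eq [:: (v, a); (w, b)] [:: (w, b); (v, a)].

Definition gp_hom (G H : lgraph) (f : word G -> word H) : Prop :=
  (forall u w, gp_eq u w -> gp_eq (f u) (f w)) /\
  (forall u w, gp_eq (f (u ++ w)) (f u ++ f w)).

Definition gp_iso (G H : lgraph) (f : word G -> word H) : Prop :=
  [/\ gp_hom f,
      (forall u w, gp_eq (f u) (f w) -> gp_eq u w) &
      (forall y, exists x, gp_eq (f x) y)].

Definition lsub (G : lgraph) (P : pred (lv G)) : lgraph :=
  @LGraph {x : lv G | P x} (fun x y => ladj G (val x) (val y))
          (fun x => lord G (val x)).

Definition infpart (G : lgraph) : pred (lv G) := fun x => lord G x == 0.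
Arguments infpart : clear implicits.
Definition lA (G : lgraph) : lgraph := lsub (infpart G).

Definition rhoA (G : lgraph) (w : word G) : word (lA G) :=
  flatten [seq (match @insub _ (infpart G) {x : lv G | infpart G x} x.1 with
                | Some y => [:: (y, x.2)]
                | None => [::]
                end) | x <- w].

(* Main.v *)
Require Import Defs.
From HB Require Import structures.
From mathcomp Require Import all_boot all_order all_algebra.
From Stdlib Require Import Classical FunctionalExtensionality IndefiniteDescription Lia.
Set Implicit Arguments. Unset Strict Implicit. Unset Printing Implicit Defensive.
Import Order.TTheory GRing.Theory Num.Theory.


Section GP.
Variable G : lgraph.
Implicit Types (u w x y : word G) (v : lv G) (k : int).

Definition ginv (w : word G) : word G := rev (map (fun l => (l.1, - l.2)%R) w).
Definition gconj (h g : word G) : word G := ginv h ++ g ++ h.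
Definition gpow (g : word G) n : word G := flatten (nseq n g).

Lemma gp_cons u w l : gp_eq u w -> gp_eq (l :: u) (l :: w).
Proof. by move=> H; apply: (@gp_cat _ [:: l] [:: l]) => //; apply: gp_refl. Qed.

Lemma gp_catl u1 u2 w : gp_eq u1 u2 -> gp_eq (u1 ++ w) (u2 ++ w).
Proof. by move=> H; apply: gp_cat => //; apply: gp_refl. Qed.
Lemma gp_catr u w1 w2 : gp_eq w1 w2 -> gp_eq (u ++ w1) (u ++ w2).
Proof. by move=> H; apply: gp_cat => //; apply: gp_refl. Qed.

Lemma gp_zero v : gp_eq [:: (v, 0%R)] [::].
Proof. by apply: gp_triv; rewrite dvdz0. Qed.

Lemma gp_cancel2 v (k : int) : gp_eq [:: (v, k); (v, - k)%R] [::].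
Proof. apply: gp_trans (gp_merge _ _ _) _; rewrite subrr; exact: gp_zero. Qed.
Lemma gp_cancel2' v (k : int) : gp_eq [:: (v, - k)%R; (v, k)] [::].
Proof. apply: gp_trans (gp_merge _ _ _) _; rewrite addNr; exact: gp_zero. Qed.

Lemma ginv_cat u w : ginv (u ++ w) = ginv w ++ ginv u.
Proof. by rewrite /ginv map_cat rev_cat. Qed.

Lemma ginv_cons l w : ginv (l :: w) = ginv w ++ [:: (l.1, - l.2)%R].
Proof. by rewrite /ginv /= rev_cons cats1. Qed.

Lemma ginvK w : ginv (ginv w) = w.
Proof. rewrite /ginv map_rev revK -map_comp map_id_in //. by case=> a b _ /=; rewrite opprK. Qed.

Lemma ginv_l w : gp_eq (ginv w ++ w) [::].
Proof.
elim: w => [|[v k] w IH] /=; first exact: gp_refl.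
rewrite ginv_cons -catA.
apply: gp_trans IH.
apply: gp_catr.
rewrite /= -[w in X in gp_eq _ X]cat0s.
apply: (@gp_cat _ [:: (v, - k)%R; (v, k)] [::]); first exact: gp_cancel2'.
exact: gp_refl.
Qed.

Lemma ginv_r w : gp_eq (w ++ ginv w) [::].
Proof. by have := ginv_l (ginv w); rewrite ginvK. Qed.

Lemma gp_cancel_r u w x : gp_eq (u ++ x) (w ++ x) -> gp_eq u w.
Proof.
move=> H.
have H1 : gp_eq ((u ++ x) ++ ginv x) ((w ++ x) ++ ginv x) by apply: gp_catl.
rewrite -!catA in H1.
apply: gp_trans (gp_trans H1 _).
- rewrite -[u in gp_eq u _]cats0; apply: gp_sym; apply: gp_catr; exact: ginv_r.
- rewrite -[w in gp_eq _ w]cats0; apply: gp_catr; exact: ginv_r.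
Qed.

Lemma gp_cancel_l u w x : gp_eq (x ++ u) (x ++ w) -> gp_eq u w.
Proof.
move=> H.
have H1 : gp_eq (ginv x ++ (x ++ u)) (ginv x ++ (x ++ w)) by apply: gp_catr.
rewrite !catA in H1.
apply: gp_trans (gp_trans H1 _).
- rewrite -[u in gp_eq u _]cat0s; apply: gp_sym; apply: gp_catl; exact: ginv_l.
- rewrite -[w in gp_eq _ w]cat0s; apply: gp_catl; exact: ginv_l.
Qed.

Lemma gp_eq_nil_l u w : gp_eq u [::] -> gp_eq (u ++ w) w.
Proof. by move=> H; rewrite -[w in gp_eq _ w]cat0s; apply: gp_catl. Qed.

Lemma gconj_nil h g : gp_eq (gconj h g) [::] -> gp_eq g [::].
Proof.
rewrite /gconj => H.
apply: (@gp_cancel_l g [::] (ginv h)).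
apply: (@gp_cancel_r _ _ h).
rewrite -catA cats0. apply: gp_trans H _. apply: gp_sym; exact: ginv_l.
Qed.

Lemma gpowS g n : gpow g n.+1 = g ++ gpow g n.
Proof. by []. Qed.

Lemma gpow_conj h g n : gp_eq (gpow (gconj h g) n) (gconj h (gpow g n)).
Proof.
elim: n => [|n IH].
  by rewrite /gconj /=; apply: gp_sym; exact: ginv_l.
rewrite gpowS /gconj gpowS.
apply: gp_trans (gp_catr _ IH) _.
rewrite /gconj -!catA. apply: gp_catr. apply: (gp_catr g). rewrite catA; apply: gp_eq_nil_l; exact: ginv_r.
Qed.

Lemma gconj_cat h t g : gconj (h ++ t) g = gconj t (gconj h g).
Proof. by rewrite /gconj ginv_cat -!catA. Qed.

End GP.


Lemma catsplit (T : Type) (x1 y1 x2 y2 : seq T) : x1 ++ y1 = x2 ++ y2 ->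
  exists m, (x1 = x2 ++ m /\ y2 = m ++ y1) \/ (x2 = x1 ++ m /\ y1 = m ++ y2).
Proof.
elim: x1 x2 => [|a x1 IH] [|b x2] /=.
- by move=> ->; exists [::]; left.
- by move=> ->; exists (b :: x2); right.
- by move=> <-; exists (a :: x1); left.
- case=> -> /IH [m [[-> ->]|[-> ->]]]; exists m; [left|right]; by [].
Qed.

Ltac lsimp := rewrite ?cats0; repeat (rewrite -catA /=).

Section Pile.
Variable G : lgraph.
Definition L := (lv G * bool)%type.
Definition Col := (lv G * lv G)%type.
Implicit Types (v w : lv G) (a b : L) (r s : seq L) (c : Col).

Definition indep v w : bool := (v != w) && ladj G v w && ladj G w v.
Definition touch v c : bool := ~~ indep c.1 c.2 && ((c.1 == v) || (c.2 == v)).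
Definition Pi r c : seq L := [seq l <- rev r | touch l.1 c].
Definition flip a : L := (a.1, ~~ a.2).
Definition canpop (P : Col -> seq L) a : bool :=
  [forall c : Col, touch a.1 c ==> (ohead (P c) == Some (flip a))].
Definition act (P : Col -> seq L) a : Col -> seq L :=
  fun c => if touch a.1 c then (if canpop P a then behead (P c) else a :: P c) else P c.
Definition pat r : Prop := exists x y z a,
  r = x ++ a :: y ++ flip a :: z /\ all (fun l : L => indep a.1 l.1) y.

Lemma flipK a : flip (flip a) = a.
Proof. by case: a => v b; rewrite /flip /= negbK. Qed.

Lemma indepC v w : indep v w = indep w v.
Proof. by rewrite /indep eq_sym; case: (ladj G v w); case: (ladj G w v); rewrite ?andbF ?andbT. Qed.

Lemma indep_irr v : indep v v = false.
Proof. by rewrite /indep eqxx. Qed.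

Lemma touch_self v : touch v (v, v).
Proof. by rewrite /touch /= indep_irr eqxx. Qed.

Lemma touch_pair v w : ~~ indep v w -> touch v (v, w) && touch w (v, w).
Proof. by move=> H; rewrite /touch /= H !eqxx orbT. Qed.

Lemma touch_indep v w c : indep v w -> touch v c -> touch w c -> False.
Proof.
case: c => c1 c2; rewrite /touch /= => Hi /andP [Hd H1] /andP [_ H2].
move: Hi; rewrite /indep.
case/orP: H1 => /eqP E1; case/orP: H2 => /eqP E2; subst.
- by rewrite eqxx.
- by move: Hd; rewrite /indep => /negP Hd Hi; apply: Hd.
- by move: Hd; rewrite indepC /indep => /negP Hd Hi; apply: Hd.
- by rewrite eqxx.
Qed.

Lemma Pi_cat r s c : Pi (r ++ s) c = Pi s c ++ Pi r c.
Proof. by rewrite /Pi rev_cat filter_cat. Qed.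

Lemma Pi_rcons r a c : Pi (rcons r a) c = if touch a.1 c then a :: Pi r c else Pi r c.
Proof. by rewrite -cats1 Pi_cat /Pi /=; case: (touch a.1 c). Qed.

Lemma Pi_nil c : Pi [::] c = [::].
Proof. by []. Qed.

Lemma Pi_indep v r c : all (fun l : L => indep v l.1) r -> touch v c -> Pi r c = [::].
Proof.
move=> /allP H Ht; rewrite /Pi; apply/eqP; rewrite -[_ == _]negbK -has_filter.
apply/hasP => -[l]; rewrite mem_rev => Hl Hl2.
exact: (touch_indep (H l Hl) Ht Hl2).
Qed.

Lemma ohead_split (p : pred L) r q : ohead [seq l <- rev r | p l] = Some q ->
  exists r1 r2, r = r1 ++ q :: r2 /\ p q /\ all (predC p) r2.
Proof.
elim/last_ind: r => [|r l IH] //=.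
rewrite rev_rcons /=; case: ifP => Hl.
  by case=> <-; exists r, [::]; rewrite cats1.
move/IH => [r1 [r2 [-> [Hq Ha]]]].
exists r1, (rcons r2 l); split; first by rewrite rcons_cat.
by split=> //; rewrite all_rcons /= Hl Ha.
Qed.

Lemma canpop_split r a : canpop (Pi r) a ->
  exists r1 r2, r = r1 ++ flip a :: r2 /\ all (fun l : L => indep a.1 l.1) r2.
Proof.
move=> /forallP Hc.
have := Hc (a.1, a.1); rewrite touch_self /= => /eqP /ohead_split [r1 [r2 [Er [_ Ha]]]].
exists r1, r2; split=> //.
apply/allP => l Hl; apply/negPn/negP => Hn.
have /andP [T1 T2] := touch_pair Hn.
have := Hc (a.1, l.1); rewrite T1 /= => /eqP.
rewrite Er -cat_rcons Pi_cat.
have Hne : Pi r2 (a.1, l.1) != [::].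
  rewrite /Pi -has_filter; apply/hasP; exists l => //; by rewrite mem_rev.
case E : (Pi r2 (a.1, l.1)) Hne => [|h t] //= _ [Eh].
have : h \in Pi r2 (a.1, l.1) by rewrite E mem_head.
rewrite mem_filter mem_rev => /andP [_ Hh].
move/allP: Ha => /(_ h Hh) /=; rewrite Eh /= touch_self //.
Qed.

Lemma split_canpop b r1 r2 : all (fun l : L => indep b.1 l.1) r2 ->
  canpop (Pi (r1 ++ flip b :: r2)) b /\ act (Pi (r1 ++ flip b :: r2)) b = Pi (r1 ++ r2).
Proof.
move=> Ha.
have E c : touch b.1 c -> Pi (r1 ++ flip b :: r2) c = flip b :: Pi r1 c.
  move=> Ht; rewrite -cat_rcons Pi_cat Pi_rcons (Pi_indep Ha Ht) /=.
  by rewrite /flip /= Ht.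
have Hcp : canpop (Pi (r1 ++ flip b :: r2)) b.
  by apply/forallP => c; apply/implyP => Ht; rewrite E.
split=> //.
apply: functional_extensionality => c.
rewrite /act Hcp; case: ifP => Ht.
  by rewrite E //= Pi_cat (Pi_indep Ha Ht).
by rewrite -cat_rcons !Pi_cat Pi_rcons /flip /= Ht.
Qed.

Lemma act_push P a : ~~ canpop P a ->
  act P a = fun c => if touch a.1 c then a :: P c else P c.
Proof. by move=> /negbTE H; rewrite /act H. Qed.

Lemma pat_ins r1 r2 b : pat (r1 ++ r2) -> all (fun l : L => indep b.1 l.1) r2 ->
  pat (r1 ++ b :: r2).
Proof.
move=> [x [y [z [c [E Hy]]]]] Hr2.
case/catsplit: E => m [[E1 E2]|[E1 E2]]; subst.
- case: m E2 => [|c' m'] E2.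
    rewrite cat0s in E2; subst r2; exists (x ++ [:: b]), y, z, c; split=> //.
    by rewrite cats0 -catA.
  case: E2 => Ec E3; subst c'; case/catsplit: E3 => n [[E5 E4]|[E5 E4]]; subst.
  + exists x, (m' ++ b :: n), z, c; split; first by lsimp.
    rewrite all_cat /=; move: Hy; rewrite all_cat => /andP [-> ->]; rewrite andbT /=.
    by move/allP: Hr2 => /(_ (flip c)); rewrite mem_cat mem_head orbT indepC /flip /=; apply.
  + case: n E4 => [|c2 n'] E4.
      rewrite cat0s in E4; subst r2; exists x, (y ++ [:: b]), z, c; split; first by lsimp.
      rewrite all_cat Hy /= andbT.
      by move/allP: Hr2 => /(_ (flip c)); rewrite mem_head indepC /flip /=; apply.
    case: E4 => Ec2 E6; subst; exists x, y, (n' ++ b :: r2), c; split=> //; by lsimp.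
- exists (r1 ++ b :: m), y, z, c; split=> //; by lsimp.
Qed.

Lemma act_inv r a : ~ pat r -> exists r', ~ pat r' /\ act (Pi r) a = Pi r'.
Proof.
move=> Hp.
case Hc: (canpop (Pi r) a).
  case: (canpop_split Hc) => r1 [r2 [Er Ha]].
  exists (r1 ++ r2); split.
    by move=> H; apply: Hp; rewrite Er; apply: pat_ins.
  by rewrite Er; case: (split_canpop r1 Ha).
exists (rcons r a); split.
  move=> [x [y [z [c [E Hy]]]]].
  case/lastP: z E => [|z l] E.
    have E' : rcons r a = rcons (x ++ c :: y) (flip c) by rewrite E cats1 -rcons_cons rcons_cat.
    case: (rcons_inj E') => Er Ea; subst a.
    have Hb : all (fun l : L => indep (flip c).1 l.1) y by [].
    have H1 := (split_canpop x Hb).1.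
    by rewrite flipK -Er Hc in H1.
  have E' : rcons r a = rcons (x ++ c :: y ++ flip c :: z) l by rewrite E !(rcons_cat, rcons_cons).
  case: (rcons_inj E') => Er _; apply: Hp; exists x, y, z, c; split => //.
apply: functional_extensionality => c.
by rewrite act_push ?Hc // Pi_rcons.
Qed.

Lemma act_back r a : ~ pat r -> act (act (Pi r) a) (flip a) = Pi r.
Proof.
move=> Hp.
case Hc: (canpop (Pi r) a).
  case: (canpop_split Hc) => r1 [r2 [Er Ha]].
  rewrite {1}Er; have [_ ->] := split_canpop r1 Ha.
  case Hc2: (canpop (Pi (r1 ++ r2)) (flip a)).
    case: (canpop_split Hc2) => s1 [s2 []]; rewrite flipK => E2 Hs2.
    exfalso; apply: Hp; rewrite Er.
    case/catsplit: E2 => m [[E1 E3]|[E1 E3]].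
      case: m E1 E3 => [|c m'] E1 E3.
        rewrite cat0s in E3; subst r2; move: Ha => /= /andP []; by rewrite indep_irr.
      case: E3 => Ec E4; subst c s2 r1; exists s1, m', r2, a; split; first by lsimp.
      by move: Hs2; rewrite all_cat => /andP [].
    by move: Ha; rewrite E3 all_cat /= indep_irr andbF.
  apply: functional_extensionality => c.
  rewrite act_push ?Hc2 //= Er -cat_rcons !Pi_cat Pi_rcons /flip /=.
  by case: ifP => // Ht; rewrite (Pi_indep Ha Ht).
have -> : act (Pi r) a = Pi (r ++ [:: flip (flip a)]).
  apply: functional_extensionality => c.
  by rewrite act_push ?Hc // flipK cats1 Pi_rcons.
by have [_ ->] := split_canpop r (b := flip a) (isT : all _ [::]); rewrite cats0.
Qed.

Lemma canpop_ext P Q a : (forall c, touch a.1 c -> P c = Q c) -> canpop P a = canpop Q a.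
Proof.
move=> H; apply: eq_forallb => c; case Ht: (touch a.1 c) => //=; by rewrite H.
Qed.

Lemma act_comm P a b : indep a.1 b.1 -> act (act P a) b = act (act P b) a.
Proof.
move=> Hi.
have Hb : forall c, touch b.1 c -> act P a c = P c.
  move=> c Hc; rewrite /act; case: ifP => // Ha; exfalso; exact: touch_indep Hi Ha Hc.
have Ha : forall c, touch a.1 c -> act P b c = P c.
  move=> c Hc; rewrite /act; case: ifP => // Hb'; exfalso; exact: touch_indep Hi Hc Hb'.
have E1 : canpop (act P a) b = canpop P b by apply: canpop_ext.
have E2 : canpop (act P b) a = canpop P a by apply: canpop_ext.
apply: functional_extensionality => c.
have actE Q x c' : act Q x c' = if touch x.1 c' then (if canpop Q x then behead (Q c') else x :: Q c') else Q c' by [].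
rewrite !actE E1 E2.
case Htb: (touch b.1 c); case Hta: (touch a.1 c) => //.
exfalso; exact: touch_indep Hi Hta Htb.
Qed.

End Pile.

Module ItzM.
Local Open Scope ring_scope.



Section Itz.
Variables (X : Type) (f g : X -> X).
Definition itz (k : int) (x : X) : X :=
  if (0 <= k)%R then iter (absz k) f x else iter (absz k) g x.

Lemma itz_pos (n : nat) x : itz n x = iter n f x.
Proof. by []. Qed.

Lemma itz_neg (n : nat) x : itz (- n%:Z)%R x = iter n g x.
Proof. by case: n. Qed.

Lemma itz0 x : itz 0 x = x.
Proof. by []. Qed.

Variable Inv : X -> Prop.
Hypotheses (Hf : forall x, Inv x -> Inv (f x)) (Hg : forall x, Inv x -> Inv (g x))
  (Hgf : forall x, Inv x -> g (f x) = x) (Hfg : forall x, Inv x -> f (g x) = x).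

Lemma iter_inv h n x : (forall y, Inv y -> Inv (h y)) -> Inv x -> Inv (iter n h x).
Proof. move=> H; elim: n => //= n IH Hx; apply: H; exact: IH. Qed.

Lemma itz_inv k x : Inv x -> Inv (itz k x).
Proof. by rewrite /itz; case: ifP => _; apply: iter_inv. Qed.

Lemma itz_S k x : Inv x -> itz (k + 1)%R x = f (itz k x).
Proof.
move=> Hx; elim/int_rec: k => [|n _|n _].
- by [].
- by rewrite -PoszD addn1 !itz_pos.
- have -> : (- n.+1%:Z + 1 = - n%:Z :> int)%R.
    by rewrite -addn1 PoszD opprD addrNK.
  rewrite !itz_neg /= Hfg //; exact: iter_inv.
Qed.

Lemma itz_P k x : Inv x -> itz (k - 1)%R x = g (itz k x).
Proof.
move=> Hx; rewrite -{2}[k](subrK 1%R) itz_S // Hgf //; exact: itz_inv.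
Qed.

Lemma itz_add a b x : Inv x -> itz b (itz a x) = itz (a + b)%R x.
Proof.
move=> Hx; elim/int_rec: b => [|n IH|n IH].
- by rewrite addr0.
- by rewrite itz_pos /= -itz_pos IH -itz_S // -addrA -PoszD addn1.
- by rewrite itz_neg /= -itz_neg IH -itz_P // -addn1 PoszD opprD addrA.
Qed.
End Itz.

Lemma iter_comm_gen (X : Type) (F H : X -> X) : (forall x, F (H x) = H (F x)) ->
  forall n m x, iter n F (iter m H x) = iter m H (iter n F x).
Proof.
move=> C n m x.
have E : forall k y, iter k F (H y) = H (iter k F y).
  by elim=> //= k IH y; rewrite IH C.
by elim: m => //= m IH; rewrite E IH.
Qed.

Lemma itz_comm (X : Type) (f1 g1 f2 g2 : X -> X) :
  (forall x, f1 (f2 x) = f2 (f1 x)) -> (forall x, f1 (g2 x) = g2 (f1 x)) ->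
  (forall x, g1 (f2 x) = f2 (g1 x)) -> (forall x, g1 (g2 x) = g2 (g1 x)) ->
  forall a b x, itz f1 g1 a (itz f2 g2 b x) = itz f2 g2 b (itz f1 g1 a x).
Proof.
move=> C1 C2 C3 C4 a b x; rewrite /itz.
by case: ifP => _; case: ifP => _; apply: iter_comm_gen.
Qed.

End ItzM.
Import ItzM.


Section Word.
Variable G : lgraph.
Hypothesis hord : forall x, lord G x = 0%N.
Hypothesis hirr : forall x, ~~ ladj G x x.
Hypothesis hsym : forall x y, ladj G x y = ladj G y x.

Definition sgn (b : bool) : int := if b then 1%R else (-1)%R.
Definition emb (e : seq (L G)) : word G := map (fun a => (a.1, sgn a.2)) e.
Definition St := Col G -> seq (L G).
Definition actk (P : St) (l : lv G * int) : St :=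
  itz (fun Q => act Q (l.1, true)) (fun Q => act Q (l.1, false)) l.2 P.
Definition run (w : word G) (P : St) : St := foldl actk P w.
Definition InvP (P : St) : Prop := exists r, ~ pat r /\ P = Pi r.

Lemma InvP_act P a : InvP P -> InvP (act P a).
Proof. move=> [r [Hr ->]]; case: (act_inv a Hr) => r' [H1 H2]; exists r'; by split. Qed.

Lemma act_tf P v : InvP P -> act (act P (v, true)) (v, false) = P.
Proof. move=> [r [Hr ->]]; exact: (act_back (v, true) Hr). Qed.

Lemma act_ft P v : InvP P -> act (act P (v, false)) (v, true) = P.
Proof. move=> [r [Hr ->]]; exact: (act_back (v, false) Hr). Qed.

Lemma InvP_actk P l : InvP P -> InvP (actk P l).
Proof. move=> H; apply: (itz_inv (Inv := InvP)) => // Q; exact: InvP_act. Qed.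

Lemma actk_add P v a b : InvP P -> actk (actk P (v, a)) (v, b) = actk P (v, (a + b)%R).
Proof.
move=> H; rewrite /actk /=.
apply: (itz_add (Inv := InvP)) => // Q HQ; by [apply: InvP_act|apply: act_tf|apply: act_ft].
Qed.

Lemma run_inv w P : InvP P -> InvP (run w P).
Proof. elim: w P => //= l w IH P H; apply: IH; exact: InvP_actk. Qed.

Lemma run_cat u w P : run (u ++ w) P = run w (run u P).
Proof. by rewrite /run foldl_cat. Qed.

Lemma run_eq u w : gp_eq u w -> forall P, InvP P -> run u P = run w P.
Proof.
elim=> {u w}.
- by [].
- by move=> u w _ IH P H; rewrite IH.
- by move=> u w z _ IH1 _ IH2 P H; rewrite IH1 // IH2.
- move=> u1 u2 w1 w2 _ IH1 _ IH2 P H.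
  by rewrite !run_cat IH1 // IH2 //; apply: run_inv.
- by move=> v a b P H; rewrite /run /= actk_add.
- move=> v k; rewrite hord dvd0z => /eqP -> P H; by [].
- move=> v w a b Hadj P H; rewrite /run /= /actk /=.
  have Hi : indep v w.
    rewrite /indep Hadj -hsym Hadj !andbT.
    by apply/negP => /eqP E; subst w; move: (hirr v); rewrite Hadj.
  by apply: itz_comm => x; apply: (act_comm x (a:=(_,_)) (b:=(_,_))).
Qed.

Lemma InvP_nil : InvP (Pi [::]).
Proof.
exists [::]; split=> //; move=> [x [y [z [a [E _]]]]].
by case: x E.
Qed.

Lemma pat_rcons (r : seq (L G)) a : pat r -> pat (rcons r a).
Proof.
move=> [x [y [z [c [E H]]]]]; exists x, y, (rcons z a), c; split=> //.
by rewrite E !(rcons_cat, rcons_cons).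
Qed.

Lemma run_emb e : ~ pat e -> run (emb e) (Pi [::]) = Pi e.
Proof.
elim/last_ind: e => [|e a IH] Hp //.
have Hp' : ~ pat e by move=> H; apply: Hp; exact: pat_rcons.
rewrite /emb map_rcons -/(emb e) /run foldl_rcons -/(run _ _) IH //.
have -> : actk (Pi e) (a.1, sgn a.2) = act (Pi e) a.
  by case: a {Hp} => v [].
case Hc: (canpop (Pi e) a).
  exfalso; case: (canpop_split Hc) => r1 [r2 [Er Ha]]; apply: Hp.
  exists r1, r2, [::], (flip a); split; last by [].
  by rewrite Er rcons_cat rcons_cons cats1 flipK.
apply: functional_extensionality => c.
by rewrite act_push ?Hc // Pi_rcons.
Qed.

Lemma word_problem e : ~ pat e -> e <> [::] -> ~ gp_eq (emb e) [::].
Proof.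
move=> Hp Hne Heq.
have := run_eq Heq InvP_nil; rewrite run_emb // /= => E.
case: e Hne Hp Heq E => [|a e] // _ _ _ E.
have := congr1 (fun P => P (a.1, a.1)) E; rewrite /= /Pi /=.
rewrite filter_rev => E2.
have : a \in [seq l <- a :: e | touch l.1 (a.1, a.1)] by rewrite mem_filter touch_self mem_head.
by rewrite -mem_rev E2.
Qed.

End Word.


Definition epow (T : Type) (e : seq T) n : seq T := flatten (nseq n e).

Lemma size_epow (T : Type) (e : seq T) n : size (epow e n) = (n * size e)%N.
Proof. by elim: n => //= n IH; rewrite size_cat IH mulSn. Qed.



Lemma nth_epow (T : Type) (d : T) e n m : (m < n * size e)%N ->
  nth d (epow e n) m = nth d e (m %% size e).
Proof.
elim: n m => [|n IH] m //= Hm.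
rewrite nth_cat; case: ifP => H1; first by rewrite modn_small.
have H2 : (size e <= m)%N by rewrite leqNgt H1.
have Hm2 : (m - size e < n * size e)%N by rewrite ltn_subLR // -mulSn.
by rewrite IH // -{2}(subnK H2) modnDr.
Qed.

Lemma nth_rot' (T : Type) (d : T) e k t : (k <= size e)%N -> (t < size e)%N ->
  nth d (rot k e) t = nth d e ((k + t) %% size e).
Proof.
move=> Hk Ht; rewrite /rot nth_cat size_drop.
case: ifP => H1.
  by rewrite nth_drop modn_small // -ltn_subRL.
have H2 : (size e - k <= t)%N by rewrite leqNgt H1.
move: (size e) Hk Ht H1 H2 => s Hk Ht H1 H2.
rewrite nth_take; last first.
  move: Hk Ht H2 => /ssrnat.leP Hk /ssrnat.ltP Ht /ssrnat.leP H2; apply/ssrnat.ltP; rewrite -?minusE -?plusE in Hk Ht H2 *; lia.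
have -> : (k + t = (t - (s - k)) + s)%N.
  move: Hk Ht H2 => /ssrnat.leP Hk /ssrnat.ltP Ht /ssrnat.leP H2; rewrite -?minusE -?plusE in Hk Ht H2 *; lia.
rewrite modnDr modn_small //.
move: Hk Ht H2 => /ssrnat.leP Hk /ssrnat.ltP Ht /ssrnat.leP H2; apply/ssrnat.ltP; rewrite -?minusE -?plusE in Hk Ht H2 *; lia.
Qed.

Ltac nlia := repeat match goal with H : is_true (_ <= _)%N |- _ => move/ssrnat.leP: H => H end;
  (try apply/ssrnat.leP); unfold subn, addn, muln in *; lia.

Section Tors.
Variable G : lgraph.
Hypothesis hord : forall x, lord G x = 0%N.
Hypothesis hirr : forall x, ~~ ladj G x x.
Hypothesis hsym : forall x y, ladj G x y = ladj G y x.

Lemma gp_nseq (v : lv G) b m :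
  gp_eq (emb (nseq m (v, b))) [:: (v, (sgn b *+ m)%R)].
Proof.
elim: m => [|m IH] /=.
  by rewrite mulr0n; apply: gp_sym; apply: gp_zero.
apply: gp_trans (gp_cons _ IH) _.
by rewrite mulrS; apply: gp_merge.
Qed.

Lemma expand (g : word G) : exists e, gp_eq (emb e) g.
Proof.
elim: g => [|[v k] g [e IH]]; first by exists [::]; apply: gp_refl.
have [e1 H1] : exists e1, gp_eq (emb e1) [:: (v, k)].
  case: k => m.
    by exists (nseq m (v, true)); have := gp_nseq v true m; rewrite /sgn natz.
  exists (nseq m.+1 (v, false)); have := gp_nseq v false m.+1.
  by rewrite /sgn mulNrn natz -NegzE.
exists (e1 ++ e); rewrite /emb map_cat.
exact: (@gp_cat _ _ [:: (v, k)] _ g H1 IH).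
Qed.

Lemma move_past (v : lv G) k (y : seq (L G)) : all (fun l : L G => indep v l.1) y ->
  gp_eq ((v, k) :: emb y) (emb y ++ [:: (v, k)]).
Proof.
elim: y => [|l y IH] /=; first by move=> _; apply: gp_refl.
case/andP => Hl Hy.
have Hadj : ladj G v l.1 by move: Hl; rewrite /indep => /andP [/andP [_ ->]].
apply: gp_trans (_ : gp_eq ((l.1, sgn l.2) :: (v, k) :: emb y) _).
  exact: (@gp_cat _ [:: (v, k); (l.1, sgn l.2)] [:: (l.1, sgn l.2); (v, k)] _ _ (gp_comm _ _ Hadj) (gp_refl _)).
exact: gp_cons (IH Hy).
Qed.

Lemma shorten (e : seq (L G)) : pat e ->
  exists e', (size e' < size e)%N /\ gp_eq (emb e) (emb e').
Proof.
move=> [x [y [z [a [E Hy]]]]].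
exists (x ++ y ++ z); split.
  rewrite E !size_cat /= size_cat /=; nlia.
rewrite E /emb !map_cat /= -!/(emb _).
apply: gp_catr.
have Hs : sgn (~~ a.2) = (- sgn a.2)%R by case: a.2.
rewrite /emb map_cat /= -!/(emb _) Hs.
apply: gp_trans (_ : gp_eq ((emb y ++ [:: (a.1, sgn a.2)]) ++ (a.1, - sgn a.2)%R :: emb z) _).
  exact: (@gp_cat _ ((a.1, sgn a.2) :: emb y) _ ((a.1, - sgn a.2)%R :: emb z) _ (move_past _ Hy) (gp_refl _)).
rewrite -catA; apply: gp_catr => /=.
exact: (@gp_cat _ [:: (a.1, sgn a.2); (a.1, - sgn a.2)%R] [::] _ _ (gp_cancel2 _ _) (gp_refl _)).
Qed.

Lemma rot_conj (e : seq (L G)) k :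
  gp_eq (emb (rot k e)) (gconj (take k (emb e)) (emb e)).
Proof.
rewrite /emb map_rot -/(emb e) /rot /gconj.
rewrite -[X in gp_eq _ (_ ++ X ++ _)](cat_take_drop k (emb e)) -!catA.
apply: gp_sym; rewrite catA; apply: gp_eq_nil_l; exact: ginv_l.
Qed.

Lemma emb_epow (e : seq (L G)) n : emb (epow e n) = gpow (emb e) n.
Proof. by elim: n => //= n IH; rewrite /emb map_cat; congr (_ ++ _); exact: IH. Qed.

Lemma gpow_congr (x y : word G) n : gp_eq x y -> gp_eq (gpow x n) (gpow y n).
Proof. move=> H; elim: n => [|n IH]; [exact: gp_refl| exact: gp_cat]. Qed.

Lemma gconj_congr (h x y : word G) : gp_eq x y -> gp_eq (gconj h x) (gconj h y).
Proof. by move=> H; rewrite /gconj; apply: gp_catr; apply: gp_catl. Qed.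

Lemma pat_epow (e : seq (L G)) n : pat (epow e n) -> exists k, pat (rot k e).
Proof.
move=> [x [y [z [a [E Hy]]]]].
set E' := epow e n in E.
set p := size e.
have sE : size E' = (n * p)%N by rewrite size_epow.
have sE2 : size E' = (size x + (size y).+2 + size z)%N by rewrite E !size_cat /= size_cat /=; nlia.
have p0 : (0 < p)%N.
  rewrite lt0n; apply/negP => /eqP p0; move: sE sE2; rewrite p0 muln0 => ->; nlia.
have nE t : (t < (size y).+2)%N -> nth a E' (size x + t) = nth a (a :: y ++ [:: flip a]) t.
  move=> Ht; rewrite E nth_cat ltnNge leq_addr /= addKn.
  case: t Ht => [|t] Ht //=.
  rewrite !nth_cat; case: ifP => // H1.
  have -> : t = size y by move: Ht H1 => /ssrnat.ltP Ht /negbT; rewrite -leqNgt => /ssrnat.leP H1; nlia.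
  by rewrite subnn.
have nP m : (m < n * p)%N -> nth a E' m = nth a e (m %% p) by move=> Hm; rewrite nth_epow.
have hyp : ((size y).+2 <= p)%N.
  rewrite leqNgt; apply/negP => Hlt.
  have Hm : (size x + p < n * p)%N by rewrite -sE sE2; nlia.
  have E1 : nth a E' (size x + p) = a.
    by rewrite nP // modnDr -nP; [rewrite -[size x]addn0 (nE 0%N) | rewrite -sE sE2; nlia].
  case: (ltngtP p (size y).+1) => Hc.
  - move: (Hc) => Hc'; rewrite -(prednK p0) ltnS in Hc'.
    have := nE p.-1.+1; rewrite prednK // => /(_ (leq_trans Hc (leqnSn _))).
    rewrite E1 -[X in _ = nth _ _ X -> _](prednK p0) /= nth_cat Hc' => Ea.
    move/allP: Hy => /(_ (nth a y p.-1)); rewrite mem_nth // -Ea indep_irr => /(_ isT) //.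
  - by move: Hlt; rewrite ltnS leqNgt Hc.
  - have := nE (size y).+1 (ltnSn _); rewrite /= nth_cat ltnn subnn /= -Hc E1.
    by case: (a) => v b; rewrite /flip /=; case=> /eqP; case: b.
exists (size x %% p).
set k := size x %% p.
have Hk : (k <= p)%N by apply: ltnW; rewrite ltn_pmod.
have Ht : take (size y).+2 (rot k e) = a :: y ++ [:: flip a].
  apply: (@eq_from_nth _ a); first by rewrite size_takel ?size_rot // /= size_cat /= addn1.
  move=> t; rewrite size_takel ?size_rot // => Hts; rewrite nth_take // nth_rot' //; last by apply: leq_trans Hts hyp.
  rewrite -/p modnDml -nP; first exact: nE.
  rewrite -sE sE2; nlia.
exists [::], y, (drop (size y).+2 (rot k e)), a; split=> //.
by rewrite -{1}(cat_take_drop (size y).+2 (rot k e)) Ht /= -catA.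
Qed.

Theorem torsion_free (g : word G) n : (0 < n)%N -> gp_eq (gpow g n) [::] -> gp_eq g [::].
Proof.
move=> n0 Hg.
case: (expand g) => e0 He0.
suff : forall m e h, (size e <= m)%N -> gp_eq (emb e) (gconj h g) -> gp_eq g [::].
  by move=> H; apply: (H (size e0) e0 [::]) => //; rewrite /gconj /= cats0.
elim=> [|m IH] e h Hs He.
  move: Hs; rewrite leqn0 => /nilP Ee; subst e.
  by apply: (@gconj_nil _ h); apply: gp_sym.
case: (classic (exists k, pat (rot k e))) => [[k Hk]|Hnk].
  case: (shorten Hk) => e' [Hs' He'].
  apply: (IH e' (h ++ take k (emb e))).
    by rewrite size_rot in Hs'; rewrite -ltnS; apply: leq_trans Hs' Hs.
  rewrite gconj_cat; apply: gp_trans (gp_sym He') _.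
  apply: gp_trans (rot_conj _ _) _; exact: gconj_congr.
case: e Hs He Hnk => [|a e] Hs He Hnk.
  by apply: (@gconj_nil _ h); apply: gp_sym.
exfalso.
have Hp : ~ pat (epow (a :: e) n) by move=> H; apply: Hnk; exact: pat_epow H.
have Hne : epow (a :: e) n <> [::].
  by move=> E; move: (size_epow (a :: e) n) n0; rewrite E /=; case: (n).
apply: (word_problem hord hirr hsym Hp Hne).
rewrite emb_epow.
apply: gp_trans (gpow_congr n He) _.
apply: gp_trans (gpow_conj _ _ _) _.
apply: gp_trans (gconj_congr h Hg) _.
rewrite /gconj /= ; exact: ginv_l.
Qed.

End Tors.


Definition iotaA (G : lgraph) (u : word (lA G)) : word G := map (fun l => (val l.1, l.2)) u.

Lemma rhoA_cat G (u w : word G) : rhoA (u ++ w) = rhoA u ++ rhoA w.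
Proof. by rewrite /rhoA map_cat flatten_cat. Qed.

Lemma rhoA_cons G (l : lv G * int) (w : word G) : rhoA (l :: w) = rhoA [:: l] ++ rhoA w.
Proof. by rewrite -rhoA_cat. Qed.

Lemma rhoA_eq G (u w : word G) : gp_eq u w -> gp_eq (rhoA u) (rhoA w).
Proof.
elim=> {u w}.
- move=> w; exact: gp_refl.
- by move=> u w _ H; apply: gp_sym.
- by move=> u w z _ H1 _ H2; apply: gp_trans H1 H2.
- by move=> u1 u2 w1 w2 _ H1 _ H2; rewrite !rhoA_cat; apply: gp_cat.
- move=> v a b; rewrite /rhoA /=; case: insubP => [y Hy Ey|Hn] /=; last exact: gp_refl.
  exact: gp_merge.
- move=> v k Hk; rewrite /rhoA /=; case: insubP => [y Hy Ey|Hn] /=; last exact: gp_refl.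
  by apply: gp_triv; rewrite /= Ey.
- move=> v w a b Hadj; rewrite /rhoA /=.
  case: insubP => [y Hy Ey|Hn]; case: insubP => [y' Hy' Ey'|Hn'] /=; try exact: gp_refl.
  by apply: gp_comm; rewrite /= Ey Ey'.
Qed.

Lemma iotaA_cat G (u w : word (lA G)) : iotaA (u ++ w) = iotaA u ++ iotaA w.
Proof. by rewrite /iotaA map_cat. Qed.

Lemma iotaA_eq G (u w : word (lA G)) : gp_eq u w -> gp_eq (iotaA u) (iotaA w).
Proof.
elim=> {u w}.
- move=> w; exact: gp_refl.
- by move=> u w _ H; apply: gp_sym.
- by move=> u w z _ H1 _ H2; apply: gp_trans H1 H2.
- by move=> u1 u2 w1 w2 _ H1 _ H2; rewrite !iotaA_cat; apply: gp_cat.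
- move=> v a b; exact: gp_merge.
- move=> v k Hk; exact: gp_triv.
- move=> v w a b Hadj; exact: gp_comm.
Qed.

Lemma rhoA_iotaA G (u : word (lA G)) : rhoA (iotaA u) = u.
Proof.
elim: u => [|[y k] u IH] //=.
rewrite rhoA_cons IH /rhoA /= valK //.
Qed.

Lemma hom_nil G H (f : word G -> word H) : gp_hom f -> gp_eq (f [::]) [::].
Proof.
move=> [H1 H2].
have := H2 [::] [::]; rewrite cats0 => E.
apply: gp_sym; apply: (@gp_cancel_l _ [::] (f [::]) (f [::])); rewrite cats0; exact: E.
Qed.

Lemma hom_pow G H (f : word G -> word H) x n : gp_hom f ->
  gp_eq (f (gpow x n)) (gpow (f x) n).
Proof.
move=> Hf; elim: n => [|n IH]; first exact: hom_nil.
rewrite !gpowS; apply: gp_trans (Hf.2 _ _) _; apply: gp_catr; exact: IH.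
Qed.

Lemma gpow_single G (v : lv G) k m : gp_eq (gpow [:: (v, k)] m) [:: (v, (k *+ m)%R)].
Proof.
elim: m => [|m IH] /=; first by rewrite mulr0n; apply: gp_sym; apply: gp_zero.
apply: gp_trans (gp_cons _ IH) _; rewrite mulrS; exact: gp_merge.
Qed.

Lemma key_tors G K (f : word G -> word K) :
  (forall x, lord K x = 0%N) -> (forall x, ~~ ladj K x x) ->
  (forall x y, ladj K x y = ladj K y x) ->
  gp_hom f -> forall v k, ~~ infpart G v -> gp_eq (f [:: (v, k)]) [::].
Proof.
move=> h1 h2 h3 Hf v k Hv.
have m0 : (0 < lord G v)%N by rewrite lt0n.
apply: (torsion_free h1 h2 h3 m0).
apply: gp_trans (gp_sym (hom_pow _ _ Hf)) _.
apply: gp_trans (hom_nil Hf).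
apply: Hf.1.
apply: gp_trans (gpow_single _ _ _) _.
apply: gp_triv; rewrite -mulr_natr natz; exact: dvdz_mull.
Qed.

Lemma rhoA_in G (v : lv G) k : infpart G v -> iotaA (rhoA [:: (v, k)]) = [:: (v, k)].
Proof. move=> H; rewrite /rhoA /=; case: insubP => [y _ Ey|Hn] /=; [by rewrite Ey | by rewrite H in Hn]. Qed.

Lemma rhoA_out G (v : lv G) k : ~~ infpart G v -> rhoA [:: (v, k)] = [::].
Proof. move=> H; rewrite /rhoA /=; case: insubP => [y Hy _|Hn] //=; by rewrite Hy in H. Qed.

Lemma univ G K (f : word G -> word K) : gp_hom f ->
  (forall v k, ~~ infpart G v -> gp_eq (f [:: (v, k)]) [::]) ->
  forall w, gp_eq (f w) (f (iotaA (rhoA w))).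
Proof.
move=> Hf Hk; elim=> [|[v k] w IH]; first exact: gp_refl.
apply: gp_trans (Hf.2 [:: (v, k)] w) _.
rewrite rhoA_cons iotaA_cat.
case Hv: (infpart G v).
  rewrite rhoA_in //.
  apply: gp_trans (gp_sym (Hf.2 [:: (v, k)] _)); apply: gp_catr; exact: IH.
rewrite rhoA_out ?Hv //=; apply: gp_trans IH.
rewrite -[X in gp_eq _ X]cat0s; apply: gp_catl; apply: Hk; by rewrite Hv.
Qed.

Lemma lA_ord G x : lord (lA G) x = 0%N.
Proof. by case: x => x Hx /=; apply/eqP. Qed.

Lemma hom_comp G H K (f : word G -> word H) (g : word H -> word K) :
  gp_hom f -> gp_hom g -> (forall u w, g (u ++ w) = g u ++ g w) -> gp_hom (fun x => g (f x)).
Proof.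
move=> [f1 f2] [g1 g2] gc; split=> [u w E|u w]; first by apply: g1; apply: f1.
by rewrite -gc; apply: g1; apply: f2.
Qed.

Theorem lemma5p1 (Gam Sig : lgraph)
  (wfG : wf_lgraph Gam) (wfS : wf_lgraph Sig)
  (dG : dir_indec_cyclic Gam) (dS : dir_indec_cyclic Sig)
  (phi : word Gam -> word Sig) (hphi : gp_iso phi) :
  exists psi : word (lA Gam) -> word (lA Sig),
    gp_iso psi /\
    forall v : lv (lA Gam),
      gp_eq (psi [:: (v, 1%Z)]) (rhoA (phi [:: (val v, 1%Z)])).
Proof.
case: hphi => Hhom Hinj Hsurj.
case: wfG => _ sG iG _; case: wfS => _ sS iS _.
pose phinv y := proj1_sig (constructive_indefinite_description _ (Hsurj y)).
have Hpp y : gp_eq (phi (phinv y)) y by rewrite /phinv; case: constructive_indefinite_description.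
have Hinvhom : gp_hom phinv.
  split=> [u w E|u w].
    apply: Hinj; apply: gp_trans (Hpp u) _; apply: gp_trans E (gp_sym (Hpp w)).
  apply: Hinj; apply: gp_trans (Hpp _) _; apply: gp_sym.
  apply: gp_trans (Hhom.2 _ _) _; exact: gp_cat.
have Hpinv x : gp_eq (phinv (phi x)) x by apply: Hinj; exact: Hpp.
have hA1 K : forall x, lord (lA K) x = 0%N by move=> x; exact: lA_ord.
have rhoS_hom : gp_hom (fun x => rhoA (phi x)).
  apply: hom_comp => //; [split; [exact: rhoA_eq| by move=> u w; rewrite rhoA_cat; apply: gp_refl] | exact: rhoA_cat].
have rhoG_hom : gp_hom (fun x => rhoA (phinv x)).
  apply: hom_comp => //; [split; [exact: rhoA_eq| by move=> u w; rewrite rhoA_cat; apply: gp_refl] | exact: rhoA_cat].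
have KS := key_tors (hA1 Sig) (fun x => iS (val x)) (fun x y => sS (val x) (val y)) rhoS_hom.
have KG := key_tors (hA1 Gam) (fun x => iG (val x)) (fun x y => sG (val x) (val y)) rhoG_hom.
have US := univ rhoS_hom KS.
have UG := univ rhoG_hom KG.
exists (fun u => rhoA (phi (iotaA u))); split; last by move=> v; apply: gp_refl.
split.
- split=> [u w E|u w].
    by apply: rhoA_eq; apply: Hhom.1; apply: iotaA_eq.
  rewrite iotaA_cat; exact: rhoS_hom.2.
- move=> u w E.
  have L1 : forall y1 y2, gp_eq (rhoA y1) (rhoA y2) -> gp_eq (rhoA (phinv y1)) (rhoA (phinv y2)).
    move=> y1 y2 Ey; apply: gp_trans (UG y1) _; apply: gp_trans (gp_sym (UG y2)).
    by apply: rhoG_hom.1; apply: iotaA_eq.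
  have := L1 _ _ E.
  have Hb x : gp_eq (rhoA (phinv (phi (iotaA x)))) x.
    by rewrite -[X in gp_eq _ X]rhoA_iotaA; apply: rhoA_eq; apply: Hpinv.
  move=> H; apply: gp_trans (gp_sym (Hb u)) _; apply: gp_trans H (Hb w).
- move=> y; exists (rhoA (phinv (iotaA y))).
  apply: gp_trans (gp_sym (US _)) _.
  rewrite -[X in gp_eq _ X]rhoA_iotaA; apply: rhoA_eq; exact: Hpp.
Qed.
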